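(* If $r\ge 4$ then $\pi\ge\min\{2(n-q-2m),\,3(n-2q-m+1)\}$.
   Context: $G$ is a set of size $n$ and $G(\circ)$, $G(\ast)$ are distinct groups on $G$ with the same identity element. $\mathrm{diff}(\circ,\ast)=\{(a,b):a\circ b\ne a\ast b\}$, $\mathrm{dist}(\circ,\ast)=|\mathrm{diff}(\circ,\ast)|$, $\mathrm{dist}_a=|\{b:a\circ b\ne a\ast b\}|$; $H=\{a:\mathrm{dist}_a=0\}$, $h=|H|$; $K=\{a:\mathrm{dist}_a<n/3\}$, $k=|K|$; $m=\min\{\mathrm{dist}_a:\mathrm{dist}_a>0\}$. Standing assumption: $m\ge 3$. Let $q=\lceil n/3\rceil$ and the profit $\pi=\mathrm{dist}(\circ,\ast)-((k-h)m+(n-k)q)$. Let $R=\{(a,a)\in\mathrm{diff}(\circ,\ast):a\in K\}$, $r=|R|$. *)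

(* Defs.v *)
From HB Require Import structures.
From mathcomp Require Import all_boot all_order all_algebra.
Set Implicit Arguments. Unset Strict Implicit. Unset Printing Implicit Defensive.

Definition is_group (T : Type) (mul : T -> T -> T) (e : T) : Prop :=
  [/\ (forall a b c, mul a (mul b c) = mul (mul a b) c),
      (forall a, mul e a = a /\ mul a e = a) &
      (forall a, exists b, mul a b = e /\ mul b a = e)].

Section Dist.
Variables (T : finType) (mul1 mul2 : T -> T -> T).

Definition nG : nat := #|T|.

Definition diffset : {set (T * T)%type} := [set p | mul1 p.1 p.2 != mul2 p.1 p.2].
Definition distG : nat := #|diffset|.
Definition dist_a (a : T) : nat := #|[set b | mul1 a b != mul2 a b]|.
Definition Hset : {set T} := [set a | dist_a a == 0].
Definition hG : nat := #|Hset|.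
(* K = {a : dist_a < n/3} (real division), i.e. 3 * dist_a < n; k = |K| *)
Definition Kset : {set T} := [set a | 3 * dist_a a < nG].
Definition kG : nat := #|Kset|.
(* m = min {dist_a : dist_a > 0}  (the default value nG is never reached
   when the groups differ, and dist_a <= nG anyway) *)
Definition mG : nat := \big[minn/nG]_(a | 0 < dist_a a) dist_a a.
(* q = ceil(n/3) *)
Definition qG : nat := (nG + 2) %/ 3.
Definition profit : int :=
  (distG%:Z - (((kG%:Z - hG%:Z) * mG%:Z) + (nG%:Z - kG%:Z) * qG%:Z))%R.
Definition Rset : {set (T * T)%type} := [set p in diffset | (p.1 == p.2) && (p.1 \in Kset)].
Definition rG : nat := #|Rset|.
End Dist.

(* Main.v *)
Require Import Defs.
From HB Require Import structures.
From mathcomp Require Import all_boot all_order all_algebra.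
From mathcomp Require Import zify.
Import Order.TTheory GRing.Theory Num.Theory.

Lemma rcancel_g (T : Type) (mul : T -> T -> T) e : is_group mul e ->
  forall u v x, mul u x = mul v x -> u = v.
Proof.
case=> A I V u v x E.
have [y [Hxy _]] := V x.
have : mul (mul u x) y = mul (mul v x) y by rewrite E.
by rewrite -!A Hxy; case: (I u) => _ ->; case: (I v) => _ ->.
Qed.

Lemma lcancel_g (T : Type) (mul : T -> T -> T) e : is_group mul e ->
  forall a, injective (mul a).
Proof.
case=> A I V a x z E.
have [y [_ Hya]] := V a.
have : mul y (mul a x) = mul y (mul a z) by rewrite E.
by rewrite !A Hya; case: (I x) => -> _; case: (I z) => -> _.
Qed.

Lemma sq_bound (T : finType) (mul1 mul2 : T -> T -> T) e :
  is_group mul1 e -> is_group mul2 e -> forall a,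
  mul1 a a != mul2 a a ->
  nG T <= dist_a mul1 mul2 (mul1 a a) + 2 * dist_a mul1 mul2 a /\
  nG T <= dist_a mul1 mul2 (mul2 a a) + 2 * dist_a mul1 mul2 a.
Proof.
move=> G1 G2 a Hne.
have A1 := G1; have A2 := G2; case: A1 => As1 _ _; case: A2 => As2 _ _.
set Ba := [set b | mul1 a b != mul2 a b].
have key : forall w, (forall x, mul1 a x = mul2 a x -> mul1 a (mul1 a x) = mul2 a (mul1 a x) ->
     mul1 w x != mul2 w x) ->
   nG T <= dist_a mul1 mul2 w + 2 * dist_a mul1 mul2 a.
  move=> w Hw.
  have sub : ~: [set b | mul1 w b != mul2 w b] \subset Ba :|: (mul1 a @^-1: Ba).
    apply/subsetP => x; rewrite !inE => /negPn /eqP Hx.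
    apply/contraT; rewrite negb_or !negbK => /andP[/eqP h1 /eqP h2].
    by move: (Hw x h1 h2); rewrite Hx eqxx.
  have c1 := cardsC [set b | mul1 w b != mul2 w b].
  have c2 := subset_leq_card sub.
  have c3 : #|Ba :|: (mul1 a @^-1: Ba)| <= #|Ba| + #|mul1 a @^-1: Ba|.
    by rewrite cardsU leq_subr.
  rewrite card_preimset in c3; last exact: (@lcancel_g T mul1 e G1 a).
  rewrite /nG -c1 /dist_a -/Ba. lia.
split; apply: key => x h1 h2; apply/negP => /eqP Hx.
- have : mul2 (mul1 a a) x = mul2 (mul2 a a) x.
    by rewrite -Hx -As1 h2 h1 As2.
  by move/(@rcancel_g T mul2 e G2 _ _ x)/eqP; rewrite (negbTE Hne).
- have : mul1 (mul2 a a) x = mul1 (mul1 a a) x.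
    by rewrite Hx -As2 -h1 -h2 As1.
  by move/(@rcancel_g T mul1 e G1 _ _ x)/eqP; rewrite eq_sym (negbTE Hne).
Qed.

Lemma card_sumb (I : finType) (A : {set I}) : #|A| = \sum_i ((i \in A) : nat).
Proof.
rewrite -sum1_card big_mkcond /=; apply: eq_bigr => i _; by case: (i \in A).
Qed.

Lemma dist_sum (T : finType) (mul1 mul2 : T -> T -> T) :
  distG mul1 mul2 = \sum_a dist_a mul1 mul2 a.
Proof.
rewrite /distG card_sumb.
rewrite (eq_bigr (fun p => ((mul1 p.1 p.2 != mul2 p.1 p.2) : nat))); last first.
  by move=> p _; rewrite inE.
rewrite -(pair_big predT predT (fun i j => ((mul1 i j != mul2 i j) : nat))) /=.
apply: eq_bigr => a _; rewrite /dist_a card_sumb; apply: eq_bigr => b _; by rewrite inE.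
Qed.

Lemma bigmin_le_seq (I : eqType) (r : seq I) (P : pred I) (F : I -> nat) x a :
  a \in r -> P a -> \big[minn/x]_(i <- r | P i) F i <= F a.
Proof.
elim: r => [//|i r IH]; rewrite inE big_cons => /orP[/eqP <- -> | ar Pa].
  exact: geq_minl.
case: (P i); last exact: IH.
exact: leq_trans (geq_minr _ _) (IH ar Pa).
Qed.

Theorem lemma9p2 (T : finType) (mul1 mul2 : T -> T -> T) (e : T) :
  is_group mul1 e -> is_group mul2 e -> mul1 <> mul2 ->
  3 <= mG mul1 mul2 ->
  4 <= rG mul1 mul2 ->
  (Order.min (2 * ((nG T)%:Z - (qG T)%:Z - 2 * (mG mul1 mul2)%:Z))
             (3 * ((nG T)%:Z - 2 * (qG T)%:Z - (mG mul1 mul2)%:Z + 1))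
   <= profit mul1 mul2)%R.
Proof.
move=> G1 G2 _ _ Hr.
have n0 : 0 < nG T by apply/card_gt0P; exists e.
have HK : Hset mul1 mul2 \subset Kset mul1 mul2.
  by apply/subsetP => a; rewrite !inE => /eqP ->; rewrite muln0.
have mle : forall a, 0 < dist_a mul1 mul2 a -> mG mul1 mul2 <= dist_a mul1 mul2 a.
  move=> a Ha; rewrite /mG; apply: bigmin_le_seq => //; exact: mem_index_enum.
pose base := fun a => if a \in Kset mul1 mul2 then
   (if a \in Hset mul1 mul2 then 0 else mG mul1 mul2) else qG T.
have baseP : forall a, base a <= dist_a mul1 mul2 a.
  move=> a; rewrite /base; case: ifP => aK; last first.
    move: aK; rewrite inE => /negbT; rewrite -leqNgt /qG => h; lia.
  case: ifP => aH //; apply: mle; move: aH; rewrite inE lt0n => /negbT //.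
have sumbase : \sum_a base a = (kG mul1 mul2 - hG mul1 mul2) * mG mul1 mul2
     + (nG T - kG mul1 mul2) * qG T.
  rewrite (bigID (fun a => a \in Kset mul1 mul2)) /=.
  congr (_ + _).
    rewrite (eq_bigr (fun a => if a \in Hset mul1 mul2 then 0 else mG mul1 mul2)); last first.
      by move=> a aK; rewrite /base aK.
    rewrite (bigID (fun a => a \in Hset mul1 mul2)) /= big1; last by move=> a /andP[_ ->].
    rewrite add0n (eq_bigr (fun _ => mG mul1 mul2)); last by move=> a /andP[_ /negbTE ->].
    rewrite (eq_bigl (mem (Kset mul1 mul2 :\: Hset mul1 mul2))); last first.
      by move=> a; rewrite !inE andbC.
    rewrite sum_nat_const cardsD (setIidPr HK) //.
  rewrite (eq_bigr (fun _ => qG T)); last by move=> a /negbTE aK; rewrite /base aK.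
  rewrite (eq_bigl (mem (~: Kset mul1 mul2))); last by move=> a; rewrite !inE.
  rewrite sum_nat_const /kG /nG -(cardsC (Kset mul1 mul2)); congr (_ * _); lia.
pose ex := fun a => dist_a mul1 mul2 a - base a.
have dsplit : distG mul1 mul2 = \sum_a base a + \sum_a ex a.
  rewrite dist_sum -big_split; apply: eq_bigr => a _; rewrite /ex /= subnKC //; exact: baseP.
pose A := [set a | (mul1 a a != mul2 a a) && (a \in Kset mul1 mul2)].
have cardA : 4 <= #|A|.
  apply: (leq_trans Hr); rewrite /rG.
  apply: (leq_trans _ (leq_imset_card (fun a => (a, a)) A)).
  apply: subset_leq_card; apply/subsetP => -[x y]; rewrite !inE /=.
  move=> /andP[hne /andP[/eqP exy xK]]; subst y; apply/imsetP; exists x => //.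
  by rewrite !inE hne xK.
have [a1 a1A] : exists a, a \in A by apply/card_gt0P; lia.
case: (@arg_minnP _ a1 (fun x => x \in A) (dist_a mul1 mul2) a1A) => a0 a0A a0min.
move: (a0A); rewrite inE => /andP[hne a0K].
have [bu bv] := @sq_bound T mul1 mul2 e G1 G2 a0 hne.
have da0 : 0 < dist_a mul1 mul2 a0 by apply/card_gt0P; exists a0; rewrite inE.
move: (a0K); rewrite inE => a0K'.
have uK : mul1 a0 a0 \notin Kset mul1 mul2 by rewrite inE -leqNgt; lia.
have vK : mul2 a0 a0 \notin Kset mul1 mul2 by rewrite inE -leqNgt; lia.
have exK : forall w, w \notin Kset mul1 mul2 -> ex w = dist_a mul1 mul2 w - qG T.
  by move=> w /negbTE wK; rewrite /ex /base wK.
have AK : forall a, a \in A -> a \in Kset mul1 mul2 by move=> a; rewrite inE => /andP[].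
have exA : forall a, a \in A -> dist_a mul1 mul2 a0 - mG mul1 mul2 <= ex a.
  move=> a aA; rewrite /ex /base (AK a aA).
  have da : 0 < dist_a mul1 mul2 a.
    by move: aA; rewrite inE => /andP[h _]; apply/card_gt0P; exists a; rewrite inE.
  have -> : (a \in Hset mul1 mul2) = false by rewrite inE; apply/negbTE; rewrite -lt0n.
  by apply: leq_sub2r; apply: a0min.
have sumA : #|A| * (dist_a mul1 mul2 a0 - mG mul1 mul2) <= \sum_(a in A) ex a.
  rewrite -sum_nat_const; apply: leq_sum => a aA; exact: exA.
have uA : mul1 a0 a0 \notin A by apply: contra uK; apply: AK.
have vA : mul2 a0 a0 \notin A by apply: contra vK; apply: AK.
have sumex : \sum_(a in A) ex a + ex (mul1 a0 a0) + ex (mul2 a0 a0) <= \sum_a ex a.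
  rewrite [X in _ <= X](bigID (fun a => a \in A)) /= -addnA; apply: leq_add; first by rewrite (eq_bigl (mem A)).
  idtac.
  rewrite (bigD1 (mul1 a0 a0)) //= leq_add2l (bigD1 (mul2 a0 a0)) /=; last first.
    by rewrite vA eq_sym hne.
  exact: leq_addr.
have cA : 4 * (dist_a mul1 mul2 a0 - mG mul1 mul2) <= #|A| * (dist_a mul1 mul2 a0 - mG mul1 mul2).
  by apply: leq_mul.
have m0 := mle a0 da0.
rewrite exK // in sumex; rewrite exK // in sumex.
have hk : hG mul1 mul2 <= kG mul1 mul2 by apply: subset_leq_card.
have kn : kG mul1 mul2 <= nG T by apply: max_card.
have Hnat : 2 * nG T + ((kG mul1 mul2 - hG mul1 mul2) * mG mul1 mul2
     + (nG T - kG mul1 mul2) * qG T) <= distG mul1 mul2 + 2 * qG T + 4 * mG mul1 mul2.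
  rewrite dsplit sumbase.
  have qu : qG T <= dist_a mul1 mul2 (mul1 a0 a0) by move: (baseP (mul1 a0 a0)); rewrite /base (negbTE uK).
  have qv : qG T <= dist_a mul1 mul2 (mul2 a0 a0) by move: (baseP (mul2 a0 a0)); rewrite /base (negbTE vK).
  lia.
rewrite ge_min; apply/orP; left.
rewrite /profit (subzn hk) (subzn kn) -!PoszM.
move: Hnat.
set X := (_ * _)%N. set Y := ((nG T - _) * _)%N.
move=> Hnat; lia.
Qed.
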